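(* Let $n\geq 3$. If a probability distribution $p=(p(v))_{v\in\{0,1\}^n}\in\Delta_{2^n-1}$ lies in the RBM model $M^1_n$, then every flattening of the table $(p(v))_{v\in\{0,1\}^n}$ has rank at most $2$, and $$\sigma_{ij}\,\sigma_{ik}\,\sigma_{jk}\geq 0\qquad\text{for all distinct } i,j,k\in\{1,\dots,n\}.$$
   Context: The RBM model $M^1_n$ is the subset of the open simplex $\Delta_{2^n-1}$ consisting of all vectors $(p(v))_{v\in\{0,1\}^n}$ with $p(v)=\frac1Z\beta_1^{v_1}\cdots\beta_n^{v_n}(1+\gamma\,\omega_1^{v_1}\cdots\omega_n^{v_n})$, all parameters in $\mathbb{R}_{>0}$, $Z$ the normalizing constant. For a partition $\{1,\dots,n\}=A\cup B$ into two nonempty sets, the flattening of the $2\times\cdots\times2$ table $(p(v))$ is the $2^{|A|}\times 2^{|B|}$ matrix with rows indexed by $\{0,1\}^A$, columns by $\{0,1\}^B$, whose entry in row $v_A$, column $v_B$ is $p(v)$ for the $v$ with restrictions $v_A,v_B$. For $i\neq j$, $\sigma_{ij}$ is the covariance of the binary random variables $X_i,X_j$ (the $i$-th and $j$-th coordinates of a random vector with distribution $p$), i.e. the determinant of the $2\times2$ marginal table $\bigl(\mathrm{Prob}(X_i=a,X_j=b)\bigr)_{a,b\in\{0,1\}}$. *)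

(* Defs.v *)
From HB Require Import structures.
From mathcomp Require Import all_boot all_order all_algebra.
From mathcomp Require Import reals.
Set Implicit Arguments. Unset Strict Implicit. Unset Printing Implicit Defensive.
Import Order.TTheory GRing.Theory Num.Theory.
Local Open Scope ring_scope.

(* States v in {0,1}^n, coordinates indexed by 'I_n (coordinate i+1 of the paper is i). *)
Definition state (n : nat) := {ffun 'I_n -> bool}.

Definition bpow (R : realType) (x : R) (b : bool) : R := if b then x else 1.

Definition rbm_weight (R : realType) (n : nat) (beta : 'I_n -> R) (gamma : R)
  (omega : 'I_n -> R) (v : state n) : R :=
  (\prod_i bpow (beta i) (v i)) * (1 + gamma * \prod_i bpow (omega i) (v i)).

Definition rbm_Z (R : realType) (n : nat) beta gamma omega : R :=
  \sum_(v : state n) rbm_weight (R := R) beta gamma omega v.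

Definition rbm_dist (R : realType) (n : nat) beta gamma omega (v : state n) : R :=
  rbm_weight beta gamma omega v / rbm_Z beta gamma omega.

Definition in_open_simplex (R : realType) (n : nat) (p : state n -> R) : Prop :=
  (forall v, 0 < p v) /\ \sum_v p v = 1.

Definition in_RBM (R : realType) (n : nat) (p : state n -> R) : Prop :=
  in_open_simplex p /\
  exists (beta : 'I_n -> R) (gamma : R) (omega : 'I_n -> R),
    (forall i, 0 < beta i) /\ 0 < gamma /\ (forall i, 0 < omega i) /\
    forall v, p v = rbm_dist beta gamma omega v.

Definition coords (n : nat) (A : {set 'I_n}) := {k : 'I_n | k \in A}.

Definition glue (n : nat) (A : {set 'I_n})
  (vA : {ffun coords A -> bool}) (vB : {ffun coords (~: A) -> bool}) : state n :=
  [ffun k => match insub k : option (coords A) with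
             | Some a => vA a
             | None => match insub k : option (coords (~: A)) with
                       | Some b => vB b
                       | None => false
                       end
             end].

Definition flattening (R : realType) (n : nat) (p : state n -> R) (A : {set 'I_n}) :
  'M[R]_(#|{: {ffun coords A -> bool}}|, #|{: {ffun coords (~: A) -> bool}}|) :=
  \matrix_(r, c) p (glue (enum_val r) (enum_val c)).

Definition marg2 (R : realType) (n : nat) (p : state n -> R) (i j : 'I_n) (a b : bool) : R :=
  \sum_(v : state n | (v i == a) && (v j == b)) p v.

(* covariance sigma_ij = determinant of the 2x2 marginal table *)
Definition sigma (R : realType) (n : nat) (p : state n -> R) (i j : 'I_n) : R :=
  marg2 p i j false false * marg2 p i j true true
  - marg2 p i j false true * marg2 p i j true false.

(* Main.v *)
Require Import Defs.
From HB Require Import structures.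
From mathcomp Require Import all_boot all_order all_algebra.
From mathcomp Require Import reals ring.
Import Order.TTheory GRing.Theory Num.Theory.
Local Open Scope ring_scope.

Lemma glue_in (n : nat) (A : {set 'I_n}) vA vB vB' k : k \in A ->
  glue (A:=A) vA vB k = glue vA vB' k.
Proof.
move=> kA; rewrite /glue !ffunE; case: insubP => [a _ _|]; first by [].
by rewrite kA.
Qed.

Lemma glue_out (n : nat) (A : {set 'I_n}) vA vA' vB k : k \notin A ->
  glue (A:=A) vA vB k = glue vA' vB k.
Proof.
move=> kA; rewrite /glue !ffunE; case: insubP => [a Ha _|]; last by [].
by rewrite Ha in kA.
Qed.

Lemma prod_glue (R : realType) (n : nat) (A : {set 'I_n}) (g : 'I_n -> bool -> R) vA vB :
  \prod_k g k (glue (A:=A) vA vB k) =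
  (\prod_(k in A) g k (glue vA [ffun => false] k)) *
  (\prod_(k | k \notin A) g k (glue [ffun => false] vB k)).
Proof.
rewrite (bigID (fun k => k \in A)) /=; congr (_ * _); apply: eq_bigr => k Hk.
  by rewrite (@glue_in _ _ vA vB [ffun => false]).
by rewrite (@glue_out _ _ vA [ffun => false]).
Qed.

Lemma weight_split (R : realType) (n : nat) beta gamma omega (v : state n) :
  rbm_weight (R:=R) beta gamma omega v =
  \prod_k bpow (beta k) (v k) + gamma * \prod_k bpow (beta k * omega k) (v k).
Proof.
rewrite /rbm_weight mulrDr mulr1 mulrCA -big_split /=; congr (_ + _ * _).
by apply: eq_bigr => k _; rewrite /bpow; case: (v k); rewrite ?mulr1.
Qed.

Lemma rank_part (R : realType) (n : nat) (p : state n -> R) (A : {set 'I_n}) :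
  in_RBM p -> (\rank (flattening p A) <= 2)%N.
Proof.
move=> [_ [beta [gamma [omega [_ [_ [_ Hp]]]]]]].
set Z := rbm_Z beta gamma omega.
pose g1 := fun k b => bpow (beta k) b.
pose g2 := fun k b => bpow (beta k * omega k) b.
pose X : 'M[R]_(#|{: {ffun coords A -> bool}}|, 2) := \matrix_(r, t) (if t == ord0 then
    \prod_(k in A) g1 k (glue (enum_val r) [ffun => false] k)
  else \prod_(k in A) g2 k (glue (enum_val r) [ffun => false] k)).
pose Y : 'M[R]_(2, #|{: {ffun coords (~: A) -> bool}}|) := \matrix_(t, c) (if t == ord0 then
    \prod_(k | k \notin A) g1 k (glue [ffun => false] (enum_val c) k) / Z
  else gamma * \prod_(k | k \notin A) g2 k (glue [ffun => false] (enum_val c) k) / Z).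
have -> : flattening p A = X *m Y.
  apply/matrixP => r c; rewrite !mxE big_ord_recl big_ord1 !mxE /=.
  rewrite Hp /rbm_dist weight_split. rewrite (@prod_glue R n A (fun k b => bpow (beta k) b)) (@prod_glue R n A (fun k b => bpow (beta k * omega k) b)) /=.
  rewrite /g1 /g2 -/Z mulrDl /=; congr (_ + _); rewrite ?mulrA //; congr (_ * _ * _); exact: mulrC.
exact: mulmx_max_rank.
Qed.
Definition flipv (n : nat) (i j : 'I_n) (c d : bool) (v : state n) : state n :=
  [ffun k => if k == i then v k (+) c else if k == j then v k (+) d else v k].

Lemma flipvK n i j c d : cancel (@flipv n i j c d) (@flipv n i j c d).
Proof.
move=> v; apply/ffunP => k; rewrite !ffunE.
by case: (k == i); case: (k == j); rewrite ?addbK.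
Qed.

Definition Tm (R : realType) (n : nat) (g : 'I_n -> bool -> R) (i j : 'I_n) : R :=
  \sum_(v : state n | (v i == false) && (v j == false))
     \prod_(k | (k != i) && (k != j)) g k (v k).
Arguments Tm {R n}.

Lemma marg_mult (R : realType) (n : nat) (g : 'I_n -> bool -> R) (i j : 'I_n) a b :
  i != j ->
  \sum_(v : state n | (v i == a) && (v j == b)) \prod_k g k (v k)
  = g i a * g j b * Tm g i j.
Proof.
move=> ij.
have ji : j != i by rewrite eq_sym.
rewrite (eq_bigr (fun v : state n => g i a * g j b *
            \prod_(k | (k != i) && (k != j)) g k (v k))); last first.
  move=> v /andP [/eqP via /eqP vjb].
  by rewrite (bigD1 i) //= (bigD1 j) //= via vjb mulrA.
rewrite -mulr_sumr; congr (_ * _).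
rewrite (reindex_inj (can_inj (@flipvK n i j a b))) /Tm.
apply: eq_big => v.
  rewrite !ffunE eqxx (negbTE ji) eqxx.
  by case: (v i); case: (v j); case: a; case: b.
move=> _; apply: eq_bigr => k /andP [ki kj].
by rewrite ffunE (negbTE ki) (negbTE kj).
Qed.

Arguments marg_mult {R n}.

Lemma Tm_ge0 (R : realType) (n : nat) (g : 'I_n -> bool -> R) i j :
  (forall k b, 0 <= g k b) -> 0 <= Tm g i j.
Proof.
move=> H; apply: sumr_ge0 => v _; apply: prodr_ge0 => k _; exact: H.
Qed.

Lemma sigma_eq (R : realType) (n : nat) (p : state n -> R) beta gamma omega (i j : 'I_n) :
  (forall v, p v = rbm_dist beta gamma omega v) -> i != j ->
  sigma p i j = gamma * Tm (fun k b => bpow (beta k) b) i j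
     * Tm (fun k b => bpow (beta k * omega k) b) i j
     * (beta i * (omega i - 1)) * (beta j * (omega j - 1))
     * (rbm_Z beta gamma omega)^-1 ^+ 2.
Proof.
move=> Hp ij.
set Z := rbm_Z beta gamma omega.
have hm : forall a b, marg2 p i j a b =
   ((bpow (beta i) a * bpow (beta j) b * Tm (fun k b => bpow (beta k) b) i j)
   + gamma * (bpow (beta i * omega i) a * bpow (beta j * omega j) b
        * Tm (fun k b => bpow (beta k * omega k) b) i j)) * Z^-1.
  move=> a b; rewrite /marg2.
  rewrite (eq_bigr (fun v : state n => (\prod_k bpow (beta k) (v k) +
      gamma * \prod_k bpow (beta k * omega k) (v k)) * Z^-1)); last first.
    by move=> v _; rewrite Hp /rbm_dist weight_split.
  rewrite -mulr_suml big_split -mulr_sumr /=.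
  have h1 := marg_mult (fun k b => bpow (beta k) b) i j a b ij.
  have h2 := marg_mult (fun k b => bpow (beta k * omega k) b) i j a b ij.
  simpl in h1, h2; by rewrite h1 h2.
rewrite /sigma !hm /bpow /=; ring.
Qed.

Theorem corollary3p4 (R : realType) (n : nat) (p : state n -> R) :
  (3 <= n)%N -> in_RBM p ->
  (forall A : {set 'I_n}, A != set0 -> ~: A != set0 ->
     (\rank (flattening p A) <= 2)%N) /\
  (forall i j k : 'I_n, i != j -> i != k -> j != k ->
     0 <= sigma p i j * sigma p i k * sigma p j k).
Proof.
move=> _ HR; split; first by move=> A _ _; exact: rank_part.
move=> i j k ij ik jk.
case: HR => _ [beta [gamma [omega [Hb [Hg [Ho Hp]]]]]].
rewrite !(@sigma_eq R n p beta gamma omega _ _ Hp) //.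
set Z := (rbm_Z beta gamma omega)^-1.
set g1 := fun k b => bpow (beta k) b.
set g2 := fun k b => bpow (beta k * omega k) b.
have g1p : forall k b, 0 <= g1 k b.
  by move=> l b; rewrite /g1 /bpow; case: b => //; exact/ltW/Hb.
have g2p : forall k b, 0 <= g2 k b.
  by move=> l b; rewrite /g2 /bpow; case: b => //; exact/ltW/mulr_gt0.
have := Tm_ge0 _ _ _ i j g1p; have := Tm_ge0 _ _ _ i j g2p.
have := Tm_ge0 _ _ _ i k g1p; have := Tm_ge0 _ _ _ i k g2p.
have := Tm_ge0 _ _ _ j k g1p; have := Tm_ge0 _ _ _ j k g2p.
move: (Tm g1 i j) (Tm g2 i j) (Tm g1 i k) (Tm g2 i k) (Tm g1 j k) (Tm g2 j k).
move: (beta i * (omega i - 1)) (beta j * (omega j - 1)) (beta k * (omega k - 1)).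
move=> ai aj ak t1 t2 t3 t4 t5 t6 h6 h5 h4 h3 h2 h1.
have -> : gamma * t1 * t2 * ai * aj * Z ^+ 2 * (gamma * t3 * t4 * ai * ak * Z ^+ 2) *
   (gamma * t5 * t6 * aj * ak * Z ^+ 2) =
   (gamma ^+ 3 * (t1 * t2 * t3 * t4 * t5 * t6) * (Z ^+ 2) ^+ 3) * (ai * aj * ak) ^+ 2.
  by ring.
apply: mulr_ge0; last exact: sqr_ge0.
apply: mulr_ge0; last exact: exprn_ge0 (sqr_ge0 Z).
apply: mulr_ge0; first by apply: exprn_ge0; apply: ltW.
by do !apply: mulr_ge0.
Qed.
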